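(* There is an absolute constant $c>0$ such that for all integers $N,M$ for which $C_{N,M}$ is defined, there is a 2D SLP of size at most $c\cdot(\log N+\log M)$ deriving $C_{N,M}$.
   Context: Alphabet $\Sigma\supseteq\{0,1,\$\}$; logarithms are base 2. For $N=2^n$, $\mathsf{Bin}_N$ is the $N\times(n+2)$ array whose $i$-th row is $\$\,b_{i-1}\,\$$ with $b_{i-1}$ the $n$-bit binary representation of $i-1$; $\mathsf{ShiftBin}_N$ is the $2N\times N(n+2)$ array in which, for each $j\in[1..N]$, rows $j..j+N-1$ and columns $(j-1)(n+2)+1..j(n+2)$ form a copy of $\mathsf{Bin}_N$, all other entries being $0$. For integers $N\ge1$, $M\ge4$, let $M'=2^{n}$ be the largest power of two with $M'(\log M'+2)\le M/2$, assume $N\ge M'$, and let $B=\mathsf{ShiftBin}_{M'}$ (of size $2M'\times M'(\log M'+2)$). The 2D string $C_{N,M}$ of size $N\times M$ is the horizontal concatenation of three parts: (1) the left block, of width $M'(\log M'+2)$: $\lfloor N/(2M')\rfloor$ copies of $B$ stacked vertically, followed below by rows of $0$'s to reach height $N$; (2) the right block, of the same width: $M'$ rows of $0$'s, then $\lfloor (N-M')/(2M')\rfloor$ copies of $B$ stacked vertically, then rows of $0$'s to reach height $N$; (3) an all-$0$ block completing the width to $M$. A 2D SLP is a triple $(\mathcal V,\mathcal S,\rho)$ of nonterminals with dimensions, a start, and productions each being a character, a horizontal concatenation of two nonterminals of equal height, or a vertical concatenation of two nonterminals of equal width, with acyclic occurrence relation; it derives the recursive expansion of $\mathcal S$. Its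 size is the total number of symbols on all right-hand sides. *)

(* Defs.v *)
From Stdlib Require Import Reals.
From mathcomp Require Import all_boot.

Set Implicit Arguments.
Unset Strict Implicit.
Unset Printing Implicit Defensive.

(* A 2D string over S is represented as the list of its rows (top to bottom),
   each row a list of symbols (left to right). *)
Definition str2 (S : Type) := seq (seq S).

Definition width2 (S : Type) (A : str2 S) : nat := size (head [::] A).

Definition hcat2 (S : Type) (A B : str2 S) : str2 S :=
  [seq x.1 ++ x.2 | x <- zip A B].

Definition vcat2 (S : Type) (A B : str2 S) : str2 S := A ++ B.

(* Nonterminals are the natural numbers 0 .. size P - 1; production of
   nonterminal i is the i-th entry of P. Right-hand sides: *)
Inductive rhs (S : Type) :=
| RChar of S
| RHor of nat & nat
| RVer of nat & nat.

Definition rhs_size (S : Type) (r : rhs S) : nat :=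
  match r with RChar _ => 1 | RHor _ _ => 2 | RVer _ _ => 2 end.

Definition slp_size (S : Type) (P : seq (rhs S)) : nat :=
  \sum_(r <- P) rhs_size r.

(* Acyclicity of the occurrence relation is enforced by requiring every
   nonterminal to occur only on the right-hand sides of larger-numbered
   nonterminals (a topological numbering, which every acyclic SLP admits);
   dimension compatibility of concatenations is required explicitly. *)
Inductive derives (S : Type) (P : seq (rhs S)) : nat -> str2 S -> Prop :=
| der_char i a :
    onth P i = Some (RChar a) -> derives P i [:: [:: a]]
| der_hor i x y A B :
    onth P i = Some (RHor S x y) -> x < i -> y < i ->
    derives P x A -> derives P y B -> size A = size B ->
    derives P i (hcat2 A B)
| der_ver i x y A B :
    onth P i = Some (RVer S x y) -> x < i -> y < i ->
    derives P x A -> derives P y B -> width2 A = width2 B ->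
    derives P i (vcat2 A B).

Definition slp_derives (S : Type) (P : seq (rhs S)) (s : nat) (X : str2 S) : Prop :=
  derives P s X.

(* n = log M', where M' = 2^n is the largest power of two with
   M'(log M' + 2) <= M/2, i.e. 2 * 2^n * (n+2) <= M. (Such n < M.) *)
Definition logMp (M : nat) : nat := \max_(k < M | 2 * 2 ^ k * (k + 2) <= M) k.
Definition Mp (M : nat) : nat := 2 ^ logMp M.

Section CDef.
Variables (S : Type) (zero one dollar : S).

(* Entry (i,k) (0-indexed) of Bin_{2^n}: row i is "$ b_i $", b_i the n-bit
   binary representation of i, most significant bit first. *)
Definition bin_entry (n i k : nat) : S :=
  if (k == 0) || (k == n.+1) then dollar
  else if odd (i %/ 2 ^ (n - k)) then one else zero.

(* Entry (r,c) (0-indexed) of ShiftBin_{2^n} (size 2*2^n x 2^n*(n+2)):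
   the j-th copy (j = c / (n+2), 0-indexed) occupies rows j .. j+2^n-1. *)
Definition shiftbin_entry (n r c : nat) : S :=
  let j := c %/ (n + 2) in
  let k := c %% (n + 2) in
  if (j <= r) && (r < j + 2 ^ n) then bin_entry n (r - j) k else zero.

Definition C_entry (N M r c : nat) : S :=
  let n := logMp M in
  let m := 2 ^ n in
  let W := m * (n + 2) in
  if c < W then
    if r < (N %/ (2 * m)) * (2 * m) then shiftbin_entry n (r %% (2 * m)) c
    else zero
  else if c < 2 * W then
    if (m <= r) && (r - m < ((N - m) %/ (2 * m)) * (2 * m))
    then shiftbin_entry n ((r - m) %% (2 * m)) (c - W)
    else zero
  else zero.

Definition C_str (N M : nat) : str2 S :=
  mkseq (fun r => mkseq (fun c => C_entry N M r c) M) N.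

End CDef.

Definition C_defined (N M : nat) : Prop := 1 <= N /\ 4 <= M /\ Mp M <= N.

Definition log2R (x : R) : R := Rdiv (ln x) (ln (IZR 2%Z)).

(* Main.v *)
Require Import Defs.
From Stdlib Require Import Reals.
From Stdlib Require Import Lra.
From mathcomp Require Import all_boot zify.

Set Implicit Arguments.
Unset Strict Implicit.
Unset Printing Implicit Defensive.

Section Build.
Variable Sy : Type.

Definition mk (h w : nat) (f : nat -> nat -> Sy) : str2 Sy :=
  mkseq (fun r => mkseq (fun c => f r c) w) h.

Lemma size_mk h w f : size (mk h w f) = h.
Proof. by rewrite /mk size_mkseq. Qed.

Lemma width_mk h w f : 0 < h -> width2 (mk h w f) = w.
Proof. by case: h => // h _; rewrite /width2 /mk /mkseq /= size_map size_iota. Qed.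

Lemma eq_mk h w f g : (forall r c, r < h -> c < w -> f r c = g r c) ->
  mk h w f = mk h w g.
Proof.
move=> E; rewrite /mk /mkseq; apply/eq_in_map => r; rewrite mem_iota => /andP[_ hr].
apply/eq_in_map => c; rewrite mem_iota => /andP[_ hc]; exact: E.
Qed.

Lemma mkseqD (T : Type) (F : nat -> T) a b :
  mkseq F (a + b) = mkseq F a ++ mkseq (fun i => F (a + i)) b.
Proof. rewrite /mkseq iotaD map_cat add0n; congr (_ ++ _). by rewrite -[in iota a b](addn0 a) iotaDl -map_comp. Qed.

Lemma vcat_mk h1 h2 w f g :
  vcat2 (mk h1 w f) (mk h2 w g) =
  mk (h1 + h2) w (fun r c => if r < h1 then f r c else g (r - h1) c).
Proof.
rewrite /vcat2 /mk mkseqD; congr (_ ++ _).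
  rewrite /mkseq; apply/eq_in_map => r; rewrite mem_iota => /andP[_ ->] //.
apply: eq_mkseq => r /=; rewrite ltnNge leq_addr /=.
by apply: eq_mkseq => c; rewrite addKn.
Qed.

Lemma hcat_mk h w1 w2 f g :
  hcat2 (mk h w1 f) (mk h w2 g) =
  mk h (w1 + w2) (fun r c => if c < w1 then f r c else g r (c - w1)).
Proof.
rewrite /hcat2 /mk /mkseq.
have -> : forall (F G : nat -> seq Sy) (s : seq nat),
   zip (map F s) (map G s) = map (fun r => (F r, G r)) s.
  by move=> F G; elim=> //= x s ->.
rewrite -map_comp; apply: eq_map => r /=.
rewrite -[map _ (iota 0 (w1 + w2))]/(mkseq _ _) mkseqD; congr (_ ++ _).
  apply/eq_in_map => c; rewrite mem_iota => /andP[_ ->] //.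
apply/eq_in_map => c _ /=; rewrite ltnNge leq_addr /=.
by rewrite addKn.
Qed.

Lemma derives_lt (P : seq (rhs Sy)) i X : derives P i X -> i < size P.
Proof. by case=> [j a|j x y A B|j x y A B] E; rewrite -onthTE E. Qed.

Lemma derives_cat (P Q : seq (rhs Sy)) i X : derives P i X -> derives (P ++ Q) i X.
Proof.
have hO : forall j r, onth P j = Some r -> onth (P ++ Q) j = Some r.
  by move=> j r E; rewrite onth_cat -onthTE E.
elim=> [j a E|j x y A B E hx hy _ IH1 _ IH2 hs|j x y A B E hx hy _ IH1 _ IH2 hs].
- by apply: der_char; apply: hO.
- by apply: der_hor IH1 IH2 hs => //; apply: hO.
- by apply: der_ver IH1 IH2 hs => //; apply: hO.
Qed.


Definition Prog := seq (rhs Sy).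
Definition Mon (A : Type) := Prog -> Prog * A.
Definition ret (A : Type) (a : A) : Mon A := fun P => (P, a).
Definition bind (A B : Type) (m : Mon A) (k : A -> Mon B) : Mon B :=
  fun P => k (m P).2 (m P).1.
Definition prefix (P P' : Prog) := exists Q, P' = P ++ Q.
Definition wp (A : Type) (m : Mon A) (c : nat) (Q : A -> Prog -> Prop) (P : Prog) :=
  prefix P (m P).1 /\ size (m P).1 <= size P + c /\ Q (m P).2 (m P).1.

Lemma prefix_refl P : prefix P P.
Proof. by exists [::]; rewrite cats0. Qed.

Lemma prefix_trans P1 P2 P3 : prefix P1 P2 -> prefix P2 P3 -> prefix P1 P3.
Proof. by move=> [Q1 ->] [Q2 ->]; exists (Q1 ++ Q2); rewrite catA. Qed.

Lemma wp_ret (A : Type) (a : A) Q P : Q a P -> wp (ret a) 0 Q P.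
Proof. by move=> H; split; [apply: prefix_refl|rewrite addn0]. Qed.

Lemma wp_retc (A : Type) (a : A) c Q P : Q a P -> wp (ret a) c Q P.
Proof. by move=> H; split; [apply: prefix_refl|split => //; rewrite leq_addr]. Qed.

Lemma wp_bind (A B : Type) (m : Mon A) (k : A -> Mon B) c1 c2 Q1 Q2 P :
  wp m c1 Q1 P ->
  (forall a P1, prefix P P1 -> Q1 a P1 -> wp (k a) c2 Q2 P1) ->
  wp (bind m k) (c1 + c2) Q2 P.
Proof.
move=> [h1 [h2 h3]] H; have [h4 [h5 h6]] := H _ _ h1 h3.
rewrite /wp /bind; split; first exact: prefix_trans h4.
split => //; apply: (leq_trans h5); rewrite addnA leq_add2r //.
Qed.

Lemma wp_mono (A : Type) (m : Mon A) c c' (Q Q' : A -> Prog -> Prop) P :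
  c <= c' -> (forall a P', Q a P' -> Q' a P') -> wp m c Q P -> wp m c' Q' P.
Proof.
move=> hc hQ [h1 [h2 h3]]; split => //; split; last exact: hQ.
apply: (leq_trans h2); rewrite leq_add2l //.
Qed.

Definition ok (P : Prog) (o : option nat) h w (f : nat -> nat -> Sy) :=
  match o with
  | None => h = 0 \/ w = 0
  | Some i => 0 < h /\ 0 < w /\ derives P i (mk h w f)
  end.

Lemma ok_prefix P P' o h w f : prefix P P' -> ok P o h w f -> ok P' o h w f.
Proof.
move=> [Q ->]; case: o => //= i [h1 [h2 h3]]; split => //; split => //.
exact: derives_cat.
Qed.

Lemma ok_eq P o h w f h' w' g : h = h' -> w = w' ->
  (forall r c, r < h' -> c < w' -> f r c = g r c) ->
  ok P o h w f -> ok P o h' w' g.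
Proof.
move=> <- <- E; case: o => //= i [h1 [h2 h3]]; split => //; split => //.
by rewrite -(eq_mk E).
Qed.

Lemma onth_last (P : Prog) r : onth (P ++ [:: r]) (size P) = Some r.
Proof. by rewrite onth_cat ltnn subnn. Qed.

Definition char (a : Sy) : Mon (option nat) :=
  fun P => (P ++ [:: RChar a], Some (size P)).

Lemma wp_char a P : wp (char a) 1 (fun o P' => ok P' o 1 1 (fun _ _ => a)) P.
Proof.
split; first by exists [:: RChar a].
split; first by rewrite size_cat addn1.
split => //; split => //; apply: der_char; exact: onth_last.
Qed.

Definition hcat_o (o1 o2 : option nat) : Mon (option nat) :=
  match o1, o2 with
  | Some x, Some y => fun P => (P ++ [:: RHor Sy x y], Some (size P))
  | Some x, None => ret (Some x)
  | None, o => ret o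
  end.

Definition vcat_o (o1 o2 : option nat) : Mon (option nat) :=
  match o1, o2 with
  | Some x, Some y => fun P => (P ++ [:: RVer Sy x y], Some (size P))
  | Some x, None => ret (Some x)
  | None, o => ret o
  end.

Lemma wp_hcat P o1 o2 h w1 w2 f g :
  ok P o1 h w1 f -> ok P o2 h w2 g ->
  wp (hcat_o o1 o2) 1
    (fun o P' => ok P' o h (w1 + w2) (fun r c => if c < w1 then f r c else g r (c - w1))) P.
Proof.
case: o1 => [x|]; case: o2 => [y|] /=.
- move=> [a1 [a2 a3]] [b1 [b2 b3]].
  split; first by exists [:: RHor Sy x y].
  split; first by rewrite size_cat addn1.
  split => //; split; first by rewrite addn_gt0 a2.
  rewrite -hcat_mk; apply: der_hor.
  + exact: onth_last.
  + exact: derives_lt a3.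
  + exact: derives_lt b3.
  + exact: derives_cat.
  + exact: derives_cat.
  + by rewrite !size_mk.
- move=> [a1 [a2 a3]] [b|b]; first by move: a1; rewrite b.
  apply: wp_retc.
  rewrite b addn0 /=; split => //; split => //.
  by rewrite -(eq_mk (f := f)) // => r c _ ->.
- move=> [a|a] [b1 [b2 b3]]; first by move: b1; rewrite a.
  apply: wp_retc.
  rewrite a add0n /=; split => //; split => //.
  by rewrite -(eq_mk (f := g)) // => r c _ _; rewrite subn0.
- move=> [a|a] [b|b]; apply: wp_retc; rewrite /=; [left|left|left|right] => //.
  by rewrite a b.
Qed.

Lemma wp_vcat P o1 o2 h1 h2 w f g :
  ok P o1 h1 w f -> ok P o2 h2 w g ->
  wp (vcat_o o1 o2) 1
    (fun o P' => ok P' o (h1 + h2) w (fun r c => if r < h1 then f r c else g (r - h1) c)) P.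
Proof.
case: o1 => [x|]; case: o2 => [y|] /=.
- move=> [a1 [a2 a3]] [b1 [b2 b3]].
  split; first by exists [:: RVer Sy x y].
  split; first by rewrite size_cat addn1.
  rewrite /=; split; first by rewrite addn_gt0 a1.
  split => //.
  rewrite -vcat_mk; apply: der_ver.
  + exact: onth_last.
  + exact: derives_lt a3.
  + exact: derives_lt b3.
  + exact: derives_cat.
  + exact: derives_cat.
  + by rewrite !width_mk.
- move=> [a1 [a2 a3]] [b|b]; last by move: a2; rewrite b.
  apply: wp_retc.
  rewrite b addn0 /=; split => //; split => //.
  by rewrite -(eq_mk (f := f)) // => r c ->.
- move=> [a|a] [b1 [b2 b3]]; last by move: b2; rewrite a.
  apply: wp_retc.
  rewrite a add0n /=; split => //; split => //.
  by rewrite -(eq_mk (f := g)) // => r c _ _; rewrite subn0.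
- move=> [a|a] [b|b]; apply: wp_retc; rewrite /=; [left|right|right|right] => //.
  by rewrite a b.
Qed.


Lemma modn_subM a q w : q * w <= a -> (a - q * w) %% w = a %% w.
Proof. by move=> H; rewrite -{2}(subnK H) addnC modnMDl. Qed.

Fixpoint rep_h (d : nat) (o : option nat) (k : nat) : Mon (option nat) :=
  match d with
  | 0 => ret None
  | d'.+1 => bind (rep_h d' o k./2) (fun o1 => bind (hcat_o o1 o1)
              (fun o2 => if odd k then hcat_o o2 o else ret o2))
  end.

Fixpoint rep_v (d : nat) (o : option nat) (k : nat) : Mon (option nat) :=
  match d with
  | 0 => ret None
  | d'.+1 => bind (rep_v d' o k./2) (fun o1 => bind (vcat_o o1 o1)
              (fun o2 => if odd k then vcat_o o2 o else ret o2))
  end.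

Lemma half_lt k d : k < 2 ^ d.+1 -> k./2 < 2 ^ d.
Proof. by rewrite expnS mul2n -ltn_half_double. Qed.

Lemma wp_reph d : forall o k h w f P, ok P o h w f -> k < 2 ^ d ->
  wp (rep_h d o k) (2 * d)
     (fun o' P' => ok P' o' h (k * w) (fun r c => f r (c %% w))) P.
Proof.
elim: d => [|d IH] o k h w f P Ho Hk /=.
  apply: wp_retc; right; move: Hk; rewrite expn0 ltnS leqn0 => /eqP -> //.
have hk := odd_double_half k; rewrite -addnn in hk.
set kh := k./2 in hk *.
rewrite (_ : 2 * d.+1 = 2 * d + (1 + 1)); last by rewrite mulnS addnC.
apply: wp_bind (IH o kh h w f P Ho (half_lt Hk)) _ => o1 P1 pP1 H1.
apply: wp_bind (wp_hcat H1 H1) _ => o2 P2 pP2 H2.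
case ok: (odd k); rewrite ok in hk.
- apply: wp_mono (wp_hcat H2 (ok_prefix (prefix_trans pP1 pP2) Ho)) => // o' P' H.
  apply: ok_eq H => //; first by rewrite -hk /= !mulnDl mul1n; lia.
  move=> r c _ hc.
  case: ifP => h1; first by case: ifP => // h2; rewrite modn_subM // leqNgt h2.
  have hc1 : c - (kh * w + kh * w) < w.
    by move: hc; rewrite -{1}hk !mulnDl mul1n; lia.
  rewrite -(modn_small hc1) -mulnDl modn_subM //.
  by rewrite mulnDl leqNgt h1.
- apply: wp_retc; apply: ok_eq H2 => //; first by rewrite -hk /= !mulnDl; lia.
  move=> r c _ hc; case: ifP => // h2; rewrite modn_subM // leqNgt h2 //.
Qed.

Lemma wp_repv d : forall o k h w f P, ok P o h w f -> k < 2 ^ d ->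
  wp (rep_v d o k) (2 * d)
     (fun o' P' => ok P' o' (k * h) w (fun r c => f (r %% h) c)) P.
Proof.
elim: d => [|d IH] o k h w f P Ho Hk /=.
  apply: wp_retc; left; move: Hk; rewrite expn0 ltnS leqn0 => /eqP -> //.
have hk := odd_double_half k; rewrite -addnn in hk.
set kh := k./2 in hk *.
rewrite (_ : 2 * d.+1 = 2 * d + (1 + 1)); last by rewrite mulnS addnC.
apply: wp_bind (IH o kh h w f P Ho (half_lt Hk)) _ => o1 P1 pP1 H1.
apply: wp_bind (wp_vcat H1 H1) _ => o2 P2 pP2 H2.
case ok: (odd k); rewrite ok in hk.
- apply: wp_mono (wp_vcat H2 (ok_prefix (prefix_trans pP1 pP2) Ho)) => // o' P' H.
  apply: ok_eq H => //; first by rewrite -hk /= !mulnDl mul1n; lia.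
  move=> r c hc _.
  case: ifP => h1; first by case: ifP => // h2; rewrite modn_subM // leqNgt h2.
  have hc1 : r - (kh * h + kh * h) < h.
    by move: hc; rewrite -{1}hk !mulnDl mul1n; lia.
  rewrite -(modn_small hc1) -mulnDl modn_subM //.
  by rewrite mulnDl leqNgt h1.
- apply: wp_retc; apply: ok_eq H2 => //; first by rewrite -hk /= !mulnDl; lia.
  move=> r c hc _; case: ifP => // h2; rewrite modn_subM // leqNgt h2 //.
Qed.


Definition zeros (dN dM : nat) (z : Sy) (h w : nat) : Mon (option nat) :=
  bind (char z) (fun c => bind (rep_h dM c w) (fun row => rep_v dN row h)).

Lemma wp_zeros dN dM z h w P : h < 2 ^ dN -> w < 2 ^ dM ->
  wp (zeros dN dM z h w) (1 + (2 * dM + 2 * dN)) (fun o P' => ok P' o h w (fun _ _ => z)) P.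
Proof.
move=> hh hw; apply: wp_bind (wp_char z P) _ => c P1 _ H1.
apply: wp_bind (wp_reph H1 hw) _ => row P2 _ H2.
apply: wp_mono (wp_repv H2 hh) => // o P' H.
by apply: ok_eq H; rewrite ?muln1.
Qed.

Definition St4 := (option nat * option nat * option nat * option nat)%type.

Fixpoint binE (zero one dollar : Sy) (k : nat) : Mon St4 :=
  match k with
  | 0 => bind (char dollar) (fun d => bind (char zero) (fun z =>
           bind (char one) (fun o => ret (d, z, o, d))))
  | k'.+1 => bind (binE zero one dollar k') (fun st =>
       let: (e, z, o, d) := st in
       bind (hcat_o z e) (fun top => bind (hcat_o o e) (fun bot =>
       bind (vcat_o top bot) (fun e' => bind (vcat_o z z) (fun z' =>
       bind (vcat_o o o) (fun o' => bind (vcat_o d d) (fun d' =>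
       ret (e', z', o', d'))))))))
  end.

Definition binQ (zero one dollar : Sy) (k : nat) (st : St4) (P : Prog) :=
  let: (e, z, o, d) := st in
  ok P e (2 ^ k) k.+1 (fun i c => bin_entry zero one dollar k i c.+1) /\
  ok P z (2 ^ k) 1 (fun _ _ => zero) /\ ok P o (2 ^ k) 1 (fun _ _ => one) /\
  ok P d (2 ^ k) 1 (fun _ _ => dollar).

Lemma bin_step (zero one dollar : Sy) k i c :
  i < 2 ^ k.+1 -> c < k.+2 ->
  (if i < 2 ^ k then (if c < 1 then zero else bin_entry zero one dollar k i (c - 1).+1)
   else (if c < 1 then one else bin_entry zero one dollar k (i - 2 ^ k) (c - 1).+1))
  = bin_entry zero one dollar k.+1 i c.+1.
Proof.
move=> hi hc; have p0 : 0 < 2 ^ k by rewrite expn_gt0.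
rewrite /bin_entry; case: c hc => [|c] hc /=.
  rewrite subn1 /=.
  case: ifP => h.
    by rewrite divn_small.
  have -> : i %/ 2 ^ k = 1.
    have h1 : i %/ 2 ^ k < 2 by rewrite ltn_divLR // -expnS.
    have h2 : 1 <= i %/ 2 ^ k by rewrite leq_divRL // mul1n leqNgt h.
    lia.
  by [].
rewrite subn1 /= !eqSS subSS.
case: eqP => [_|hck]; first by case: ifP.
have hck' : c < k by rewrite ltn_neqAle -ltnS -ltnS hc andbT; apply/eqP.
case: ifP => // h.
set e := k - c.+1.
have he : e < k by rewrite /e ltn_subrL ltn0Sn (leq_ltn_trans (leq0n c) hck').
have Ei : i = (i - 2 ^ k) + 2 ^ (k - e) * 2 ^ e.
  rewrite -expnD subnK; last exact: ltnW.
  by rewrite subnK // leqNgt h.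
rewrite [in RHS]Ei divnDMl ?expn_gt0 // oddD oddX /=.
have -> : (k - e == 0) = false by apply/negbTE; rewrite -lt0n subn_gt0.
by rewrite addbF.
Qed.


Lemma wp_binE zero one dollar k P :
  wp (binE zero one dollar k) (3 + 6 * k) (binQ zero one dollar k) P.
Proof.
elim: k P => [|k IH] P /=.
  apply: wp_bind (wp_char dollar P) _ => d P1 _ H1.
  apply: wp_bind (wp_char zero P1) _ => z P2 p2 H2.
  apply: wp_bind (wp_char one P2) _ => o P3 p3 H3.
  apply: wp_retc; rewrite /binQ expn0.
  have Hd := ok_prefix (prefix_trans p2 p3) H1.
  split; last by split; [exact: ok_prefix p3 H2| split].
  apply: ok_eq Hd => // i c; rewrite !ltnS !leqn0 => /eqP -> /eqP -> //.
rewrite (_ : 3 + 6 * k.+1 = (3 + 6 * k) + (1 + (1 + (1 + (1 + (1 + (1 + 0))))))); last first.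
  by rewrite mulnS; lia.
apply: wp_bind (IH P) _ => [[[[e z] o] d]] P1 _ [He [Hz [Ho Hd]]].
apply: wp_bind (wp_hcat Hz He) _ => top P2 p2 Htop.
apply: wp_bind (wp_hcat (ok_prefix p2 Ho) (ok_prefix p2 He)) _ => bot P3 p3 Hbot.
apply: wp_bind (wp_vcat (ok_prefix p3 Htop) Hbot) _ => e' P4 p4 He'.
have p24 := prefix_trans p3 p4.
apply: wp_bind (wp_vcat (ok_prefix (prefix_trans p2 p24) Hz) (ok_prefix (prefix_trans p2 p24) Hz)) _ => z' P5 p5 Hz'.
have p15 := prefix_trans (prefix_trans p2 p24) p5.
apply: wp_bind (wp_vcat (ok_prefix p15 Ho) (ok_prefix p15 Ho)) _ => o' P6 p6 Ho'.
have p16 := prefix_trans p15 p6.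
apply: wp_bind (wp_vcat (ok_prefix p16 Hd) (ok_prefix p16 Hd)) _ => d' P7 p7 Hd'.
apply: wp_retc; rewrite /binQ; have e2 : 2 ^ k + 2 ^ k = 2 ^ k.+1 by rewrite expnS mul2n addnn.
have p57 := prefix_trans p6 p7.
split.
  apply: ok_eq (ok_prefix (prefix_trans p5 p57) He') => // i c hi hc.
  exact: bin_step.
split; first by apply: ok_eq (ok_prefix p57 Hz') => // r c _ _; case: ifP.
split; first by apply: ok_eq (ok_prefix p7 Ho') => // r c _ _; case: ifP.
by apply: ok_eq Hd' => // r c _ _; case: ifP.
Qed.

Lemma stair_step (zero one dollar : Sy) n t r c :
  c < t * (n + 2) + t * (n + 2) ->
  (if c < t * (n + 2) then
     (if r < t + 2 ^ n then shiftbin_entry zero one dollar n r c else zero)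
   else (if r < t then zero else shiftbin_entry zero one dollar n (r - t) (c - t * (n + 2))))
  = shiftbin_entry zero one dollar n r c.
Proof.
move=> hc; rewrite /shiftbin_entry; set m := 2 ^ n; set w := n + 2.
have w0 : 0 < w by rewrite /w addn2.
case: ifP => h1.
  case: ifP => // h2.
  have hj : c %/ w < t by rewrite ltn_divLR // mulnC.
  have -> : (r < c %/ w + m) = false.
    by apply/negbTE; rewrite -leqNgt; move: h2 hj; clear; lia.
  by rewrite andbF.
set c' := c - t * w.
have Ec : c = c' + t * w by rewrite /c' subnK // leqNgt h1.
have Em : (c' + t * w) %% w = c' %% w by rewrite addnC modnMDl.
rewrite [in RHS]Ec divnDMl // Em.
move: (c' %/ w) (c' %% w) => j k.
case: ifP => h3.
  have -> : (j + t <= r) = false.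
    by apply/negbTE; rewrite -ltnNge; move: h3; clear; lia.
  by [].
have -> : (j + t <= r) = (j <= r - t).
  by apply/idP/idP; move: h3; clear; lia.
have -> : (r < j + t + m) = (r - t < j + m).
  by apply/idP/idP; move: h3; clear; lia.
by rewrite [in j + t]addnC subnDA.
Qed.

Definition binB (zero one dollar : Sy) (n : nat) : Mon (option nat) :=
  bind (binE zero one dollar n) (fun st => let: (e, z, o, d) := st in hcat_o d e).

Lemma wp_binB zero one dollar n P :
  wp (binB zero one dollar n) ((3 + 6 * n) + 1)
    (fun b P' => ok P' b (2 ^ n) (n + 2) (bin_entry zero one dollar n)) P.
Proof.
apply: wp_bind (wp_binE zero one dollar n P) _ => [[[[e z] o] d]] P1 _ [He [Hz [Ho Hd]]].
apply: wp_mono (wp_hcat Hd He) => // b P' H.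
apply: ok_eq H => //; first by rewrite addn2.
move=> i c _ _; case: c => [|c] //=; by rewrite subn1.
Qed.

Fixpoint stair (b zr : option nat) (k : nat) : Mon (option nat * option nat) :=
  match k with
  | 0 => bind (vcat_o b zr) (fun a => ret (a, zr))
  | k'.+1 => bind (stair b zr k') (fun st => let: (a, z) := st in
      bind (vcat_o a z) (fun l => bind (vcat_o z a) (fun rr =>
      bind (hcat_o l rr) (fun a' => bind (hcat_o z z) (fun zz =>
      bind (vcat_o zz zz) (fun z' => ret (a', z')))))))
  end.

Lemma wp_stair zero one dollar n b zr k P :
  ok P b (2 ^ n) (n + 2) (bin_entry zero one dollar n) ->
  ok P zr 1 (n + 2) (fun _ _ => zero) ->
  wp (stair b zr k) (1 + 5 * k)
    (fun st P' => ok P' st.1 (2 ^ k + 2 ^ n) (2 ^ k * (n + 2)) (shiftbin_entry zero one dollar n)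
                  /\ ok P' st.2 (2 ^ k) (2 ^ k * (n + 2)) (fun _ _ => zero)) P.
Proof.
move=> Hb Hz; elim: k P Hb Hz => [|k IH] P Hb Hz /=.
  rewrite muln0 -[1]addn0.
  apply: wp_bind (wp_vcat Hb Hz) _ => a P1 p1 Ha.
  apply: wp_retc; rewrite /= expn0 mul1n; split; last exact: ok_prefix p1 Hz.
  apply: ok_eq Ha; first by rewrite addnC.
    by [].
  move=> r c hr hc; rewrite /shiftbin_entry divn_small // modn_small //= subn0.
  by case: ifP.
rewrite (_ : 1 + 5 * k.+1 = (1 + 5 * k) + (1 + (1 + (1 + (1 + (1 + 0)))))); last first.
  by rewrite mulnS; lia.
apply: wp_bind (IH P Hb Hz) _ => [[a z]] P1 _ /= [Ha Hz1].
set t := 2 ^ k in Ha Hz1 *; set w := n + 2 in Ha Hz1 Hb Hz *.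
have et : 2 ^ k.+1 = t + t by rewrite expnS mul2n addnn.
apply: wp_bind (wp_vcat Ha Hz1) _ => l P2 p2 Hl.
apply: wp_bind (wp_vcat (ok_prefix p2 Hz1) (ok_prefix p2 Ha)) _ => rr P3 p3 Hrr.
have Hrr' := ok_eq (h' := t + 2 ^ n + t) (w' := t * w)
   (g := fun r c => if r < t then zero else shiftbin_entry zero one dollar n (r - t) c)
   (addnC _ _) erefl (fun r c _ _ => erefl) Hrr.
apply: wp_bind (wp_hcat (ok_prefix p3 Hl) Hrr') _ => a' P4 p4 Ha'.
have p14 := prefix_trans p2 (prefix_trans p3 p4).
apply: wp_bind (wp_hcat (ok_prefix p14 Hz1) (ok_prefix p14 Hz1)) _ => zz P5 p5 Hzz.
apply: wp_bind (wp_vcat Hzz Hzz) _ => z' P6 p6 Hz'.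
apply: wp_retc => /=; split.
  apply: ok_eq (ok_prefix (prefix_trans p5 p6) Ha').
  - by rewrite et addnAC.
  - by rewrite et mulnDl.
  move=> r c hr hc; apply: stair_step; by rewrite -mulnDl -et.
apply: ok_eq Hz'; rewrite ?et ?mulnDl //.
by move=> r c _ _; case: ifP => _; case: ifP.
Qed.


Definition buildC (zero one dollar : Sy) (N M dN dM : nat) : Mon (option nat) :=
  let n := logMp M in let m := 2 ^ n in let W := m * (n + 2) in
  let q1 := N %/ (2 * m) in let q2 := (N - m) %/ (2 * m) in
  bind (binB zero one dollar n) (fun b =>
  bind (zeros dN dM zero 1 (n + 2)) (fun zr =>
  bind (stair b zr n) (fun st =>
  bind (rep_v dN st.1 q1) (fun L1 =>
  bind (zeros dN dM zero (N - q1 * (2 * m)) W) (fun Z1 =>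
  bind (vcat_o L1 Z1) (fun L =>
  bind (zeros dN dM zero m W) (fun Zm =>
  bind (rep_v dN st.1 q2) (fun R1 =>
  bind (zeros dN dM zero (N - m - q2 * (2 * m)) W) (fun Z2 =>
  bind (vcat_o R1 Z2) (fun R2 =>
  bind (vcat_o Zm R2) (fun R =>
  bind (hcat_o L R) (fun LR =>
  bind (zeros dN dM zero N (M - (W + W))) (fun Z3 =>
  hcat_o LR Z3))))))))))))).

Lemma wp_buildC zero one dollar N M dN dM P :
  let n := logMp M in
  0 < N -> 2 * 2 ^ n * (n + 2) <= M -> 2 ^ n <= N -> N < 2 ^ dN -> M < 2 ^ dM ->
  wp (buildC zero one dollar N M dN dM)
     (15 + 11 * n + 10 * dM + 14 * dN)
     (fun o P' => ok P' o N M (C_entry zero one dollar N M)) P.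
Proof.
move=> n N0 hM hmN hN hMd.
set m := 2 ^ n; set W := m * (n + 2).
have m0 : 0 < m by rewrite expn_gt0.
have m2 : 0 < 2 * m by rewrite muln_gt0.
have hz : forall h w, h <= N -> w <= M -> h < 2 ^ dN /\ w < 2 ^ dM.
  by move=> h w h1 h2; split; [apply: leq_ltn_trans hN|apply: leq_ltn_trans hMd].
have WM : W + W <= M by move: hM; rewrite /W /m; lia.
have n2M : n + 2 <= M.
  apply: leq_trans WM; rewrite /W; apply: leq_trans (leq_addr _ _).
  by rewrite leq_pmull.
have WM' : W <= M by apply: leq_trans WM; rewrite leq_addr.
set q1 := N %/ (2 * m); set q2 := (N - m) %/ (2 * m).
have q1N : q1 * (2 * m) <= N by rewrite leq_trunc_div.
have q2N : q2 * (2 * m) <= N - m by rewrite leq_trunc_div.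
have q1N' : q1 <= N by rewrite leq_div.
have q2N' : q2 <= N by apply: leq_trans (leq_div _ _) (leq_subr _ _).
eapply wp_mono; last first.
apply: wp_bind (wp_binB zero one dollar n P) _ => b P1 _ Hb.
have [h1 h2] := hz 1 (n + 2) N0 n2M.
apply: wp_bind (wp_zeros zero P1 h1 h2) _ => zr P2 p2 Hzr.
apply: wp_bind (wp_stair n (ok_prefix p2 Hb) Hzr) _ => st P3 p3 [HB _].
have HB2 : ok P3 st.1 (2 * m) W (shiftbin_entry zero one dollar n).
  by apply: ok_eq HB => //; rewrite mul2n addnn.
apply: wp_bind (wp_repv HB2 (leq_ltn_trans q1N' hN)) _ => L1 P4 p4 HL1.
have [h3 h4] := hz (N - q1 * (2 * m)) W (leq_subr _ _) WM'.
apply: wp_bind (wp_zeros zero P4 h3 h4) _ => Z1 P5 p5 HZ1.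
apply: wp_bind (wp_vcat (ok_prefix p5 HL1) HZ1) _ => L P6 p6 HL.
have [h5 h6] := hz m W hmN WM'.
apply: wp_bind (wp_zeros zero P6 h5 h6) _ => Zm P7 p7 HZm.
have p37 := prefix_trans p4 (prefix_trans p5 (prefix_trans p6 p7)).
apply: wp_bind (wp_repv (ok_prefix p37 HB2) (leq_ltn_trans q2N' hN)) _ => R1 P8 p8 HR1.
have [h7 h8] := hz (N - m - q2 * (2 * m)) W (leq_trans (leq_subr _ _) (leq_subr _ _)) WM'.
apply: wp_bind (wp_zeros zero P8 h7 h8) _ => Z2 P9 p9 HZ2.
apply: wp_bind (wp_vcat (ok_prefix p9 HR1) HZ2) _ => R2 P10 p10 HR2.
apply: wp_bind (wp_vcat (ok_prefix (prefix_trans p8 (prefix_trans p9 p10)) HZm) HR2) _ => R P11 p11 HR.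
have HL' := ok_prefix (prefix_trans p7 (prefix_trans p8 (prefix_trans p9 (prefix_trans p10 p11)))) HL.
have EL : q1 * (2 * m) + (N - q1 * (2 * m)) = N by rewrite subnKC.
have ER : m + (q2 * (2 * m) + (N - m - q2 * (2 * m))) = N by rewrite subnKC // subnKC.
rewrite EL in HL'; rewrite ER in HR.
apply: wp_bind (wp_hcat HL' HR) _ => LR P12 p12 HLR.
have [h9 h10] := hz N (M - (W + W)) (leqnn N) (leq_subr _ _).
apply: wp_bind (wp_zeros zero P12 h9 h10) _ => Z3 P13 p13 HZ3.
apply: wp_hcat (ok_prefix p13 HLR) HZ3.
2: by move: (n) (dM) (dN) => a b c; clear; lia.
move=> o P' H; apply: ok_eq H => //; first by rewrite subnKC.
move=> r c hr hc; rewrite /C_entry -/n -/m -/W -/q1 -/q2 (_ : 2 * W = W + W); last by rewrite mul2n addnn.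
case: (ltnP c W) => h1.
  by rewrite (leq_trans h1 (leq_addr _ _)).
by case: ifP => // _; case: ltnP.
Qed.

End Build.

Lemma INR_exp2 k : INR (2 ^ k) = Rpow_def.pow 2 k.
Proof.
elim: k => [|k IH]; first by rewrite expn0.
by rewrite expnS mult_INR IH.
Qed.

Lemma log2R_ge x k : 2 ^ k <= x -> Rle (INR k) (log2R (INR x)).
Proof.
move=> hx.
have l2 : Rlt 0 (ln (IZR 2)).
  rewrite -ln_1; apply: ln_increasing; lra.
have h0 : Rlt 0 (INR (2 ^ k)) by rewrite INR_exp2; apply: pow_lt; lra.
have hle : Rle (INR (2 ^ k)) (INR x) by apply: le_INR; apply/leP.
have e1 : ln (INR (2 ^ k)) = Rmult (INR k) (ln (IZR 2)).
  by rewrite INR_exp2 ln_pow //; lra.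
have hln : Rle (ln (INR (2 ^ k))) (ln (INR x)).
  case: (Rle_lt_or_eq_dec _ _ hle) => [hl|->]; last by apply: Rle_refl.
  by apply: Rlt_le; apply: ln_increasing.
rewrite /log2R e1 in hln *.
apply: (Rmult_le_reg_r (ln (IZR 2))) => //.
rewrite /Rdiv Rmult_assoc Rinv_l; last by lra.
by rewrite Rmult_1_r.
Qed.

Lemma slp_size_le (T : Type) (P : seq (rhs T)) : slp_size P <= 2 * size P.
Proof.
rewrite /slp_size; elim: P => [|r P IH]; first by rewrite big_nil.
rewrite big_cons /=; case: r => [x|x y|x y] /=; lia.
Qed.

Lemma logMp_spec M : 4 <= M -> 2 * 2 ^ logMp M * (logMp M + 2) <= M.
Proof.
move=> hM; rewrite /logMp.
apply: (@big_ind nat (fun x => 2 * 2 ^ x * (x + 2) <= M)) => //.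
by move=> x y hx hy; rewrite /maxn; case: ifP.
Qed.

Theorem mainTheorem8 :
  exists c : R, Rlt (IZR 0%Z) c /\
    forall (S : Type) (zero one dollar : S) (N M : nat),
      C_defined N M ->
      exists (P : seq (rhs S)) (s : nat),
        slp_derives P s (C_str zero one dollar N M) /\
        Rle (INR (slp_size P)) (Rmult c (Rplus (log2R (INR N)) (log2R (INR M)))).
Proof.
exists (INR 100); split; first by rewrite (INR_IZR_INZ 100) /=; lra.
move=> S zero one dollar N M [N1 [M4 hmN]].
set a := trunc_log 2 N; set b := trunc_log 2 M.
have hN : N < 2 ^ a.+1 by apply: trunc_log_ltn.
have hM : M < 2 ^ b.+1 by apply: trunc_log_ltn.
have hspec := logMp_spec M4.
have [_ [hsz Hok]] := wp_buildC zero one dollar [::] N1 hspec hmN hN hM.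
move: hsz Hok; set P := (buildC _ _ _ _ _ _ _ [::]).1; set o := (buildC _ _ _ _ _ _ _ [::]).2.
move=> hsz Hok.
case: o Hok => [s|] /=; last first.
  by move=> [h|h]; [move: N1|move: M4]; rewrite h.
move=> [_ [_ Hd]]; exists P, s; split; first exact: Hd.
have hn : logMp M <= b.
  apply: trunc_log_max => //; apply: leq_trans hspec.
  by rewrite -mulnA mulnCA leq_pmulr // muln_gt0 addn_gt0 orbT.
have hb : 2 <= b by apply: trunc_log_max => //; apply: leq_trans M4.
have hsize : slp_size P <= 100 * (a + b).
  apply: leq_trans (slp_size_le P) _; move: hsz; rewrite /= add0n.
  move: (logMp M) hn => n hn; lia.
have hla := log2R_ge (leq_trans (trunc_logP (isT : 1 < 2) N1) (leqnn N)).
have hlb := log2R_ge (trunc_logP (isT : 1 < 2) (leq_trans (isT : 0 < 4) M4)).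
rewrite -/a -/b in hla hlb.
apply: Rle_trans (le_INR _ _ (elimT leP hsize)) _.
rewrite mult_INR plus_INR.
apply: Rmult_le_compat_l; first by apply: pos_INR.
by apply: Rplus_le_compat.
Qed.
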